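(* Let $n\ge 2$, let $K$ be a field, and let $I(2,n)\subset K[x_{ij}:1\le i,j\le n]$ be the ideal generated by the $2$-minors of the generic $n\times n$ matrix $X=(x_{ij})$. Let $\succ$ be a reverse lexicographic term order induced by a total order of the variables in which $x_{11}\prec x_{22}\prec\cdots\prec x_{nn}$, every diagonal variable $x_{ii}$ is smaller than every off-diagonal variable $x_{ab}$ ($a\ne b$), and the off-diagonal variables are ordered so that $x_{ij}\succ x_{hk}$ whenever $|i-j|<|h-k|$. Let $H(2,n)$ be the monomial ideal generated by the following monomials, for all $i<h$ and $j<k$: (1) $x_{ik}x_{hj}$ whenever $i=j$ or $h=k$; (2) $x_{ij}x_{hk}$ whenever $i\neq j$ and $h\neq k$. Then $\operatorname{in}_\succ(I(2,n))=H(2,n)$.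
   Context: $\operatorname{in}_\succ(I)$ denotes the initial ideal of $I$ with respect to the term order $\succ$. *)

(* Defs.v *)
From HB Require Import structures.
From mathcomp Require Import all_boot all_order all_algebra.
From mathcomp Require Import mpoly.
Set Implicit Arguments. Unset Strict Implicit. Unset Printing Implicit Defensive.
Import Order.TTheory GRing.Theory.
Local Open Scope ring_scope.

Definition genvar (K : fieldType) (n : nat) (i j : 'I_n) : {mpoly K[n * n]} :=
  'X_(mxvec_index i j).

Definition ideal_gen (R : comNzRingType) (N : nat) (P : {mpoly R[N]} -> Prop)
    (p : {mpoly R[N]}) : Prop :=
  exists (gs cs : seq {mpoly R[N]}),
    [/\ size cs = size gs, (forall g, g \in gs -> P g) &
        p = \sum_(t < size gs) cs`_t * gs`_t].

(* The variable order is given by an injective rank function rk : 'I_N -> nat,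
   (variable v is larger than w iff rk v > rk w).
   revlex_lt rk m1 m2 means m1 < m2 (strictly) in the term order:
   deg m1 < deg m2, or the degrees agree and, at the smallest variable v
   (w.r.t. rk) in which the exponents differ, m1 has the larger exponent. *)
Definition revlex_lt (N : nat) (rk : 'I_N -> nat) (m1 m2 : 'X_{1..N}) : Prop :=
  (mdeg m1 < mdeg m2)%N \/
  (mdeg m1 = mdeg m2 /\
   exists v : 'I_N, (m2 v < m1 v)%N /\
     forall w : 'I_N, (rk w < rk v)%N -> m1 w = m2 w).

Definition is_lead_mon (R : comNzRingType) (N : nat) (rk : 'I_N -> nat)
    (f : {mpoly R[N]}) (m : 'X_{1..N}) : Prop :=
  m \in msupp f /\ forall m', m' \in msupp f -> m' != m -> revlex_lt rk m' m.

Definition initial_ideal (R : comNzRingType) (N : nat) (rk : 'I_N -> nat)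
    (I : {mpoly R[N]} -> Prop) : {mpoly R[N]} -> Prop :=
  ideal_gen (fun g => exists f m, [/\ I f, is_lead_mon rk f m & g = 'X_[m]]).

Definition minors2 (K : fieldType) (n : nat) (g : {mpoly K[n * n]}) : Prop :=
  exists i h j k : 'I_n, [/\ (i < h)%N, (j < k)%N &
    g = genvar K i j * genvar K h k - genvar K i k * genvar K h j].

Definition I2 (K : fieldType) (n : nat) := ideal_gen (@minors2 K n).

Definition Hgens (K : fieldType) (n : nat) (g : {mpoly K[n * n]}) : Prop :=
  exists i h j k : 'I_n, [/\ (i < h)%N, (j < k)%N &
    ((i = j \/ h = k) /\ g = genvar K i k * genvar K h j) \/
    ((i <> j /\ h <> k) /\ g = genvar K i j * genvar K h k)].

Definition H2 (K : fieldType) (n : nat) := ideal_gen (@Hgens K n).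

Definition vrank (n : nat) (rk : 'I_(n * n) -> nat) (i j : 'I_n) : nat :=
  rk (mxvec_index i j).

Definition idist (n : nat) (i j : 'I_n) : nat := ((i - j) + (j - i))%N.

(* Main.v *)
Require Import Defs.
From HB Require Import structures.
From mathcomp Require Import all_boot all_order all_algebra.
From mathcomp Require Import mpoly.
From mathcomp Require Import zify.
From Stdlib Require Import Classical.
Import Order.TTheory GRing.Theory.
Local Open Scope ring_scope.

Section IG.
Variables (R : comNzRingType) (N : nat).
Implicit Types (P Q : {mpoly R[N]} -> Prop).

Inductive Ig P : {mpoly R[N]} -> Prop :=
| Ig0 : Ig P 0
| IgS c g p : P g -> Ig P p -> Ig P (c * g + p).

Lemma ig_Ig P p : ideal_gen P p -> Ig P p.
Proof.
case=> gs [cs [hs hg ->]].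
elim: gs cs hs hg => [|g gs IH] [|c cs] //= hs hg.
  by rewrite big_ord0; constructor.
rewrite big_ord_recl /=; constructor; first by apply: hg; rewrite inE eqxx.
apply: IH; first by case: hs.
by move=> g' hg'; apply: hg; rewrite inE hg' orbT.
Qed.

Lemma Ig_ig P p : Ig P p -> ideal_gen P p.
Proof.
elim=> [|c g q Pg _ [gs [cs [hs hg ->]]]].
  by exists [::], [::]; split => //; rewrite big_ord0.
exists (g :: gs), (c :: cs); split => /=; first by rewrite hs.
  by move=> g'; rewrite inE => /orP[/eqP ->|]; [|apply: hg].
by rewrite big_ord_recl.
Qed.

Lemma IgD P p q : Ig P p -> Ig P q -> Ig P (p + q).
Proof.
elim=> [|c g p' Pg _ IH] hq; first by rewrite add0r.
by rewrite -addrA; constructor => //; apply: IH.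
Qed.

Lemma IgM P c p : Ig P p -> Ig P (c * p).
Proof.
elim=> [|c' g p' Pg _ IH]; first by rewrite mulr0; constructor.
by rewrite mulrDr mulrA; constructor.
Qed.

Lemma ig_trans P Q p : (forall g, P g -> ideal_gen Q g) -> ideal_gen P p -> ideal_gen Q p.
Proof.
move=> hPQ /ig_Ig h; apply: Ig_ig; elim: h => [|c g q Pg _ IH]; first by constructor.
by apply: IgD => //; apply: IgM; apply: ig_Ig; apply: hPQ.
Qed.

Lemma ig_mono P Q p : (forall g, P g -> Q g) -> ideal_gen P p -> ideal_gen Q p.
Proof.
move=> hPQ [gs [cs [hs hg ->]]]; exists gs, cs; split => // g /hg; exact: hPQ.
Qed.

Lemma ig_single P g c : P g -> ideal_gen P (c * g).
Proof.
move=> Pg; exists [:: g], [:: c]; split => //.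
  by move=> g'; rewrite inE => /eqP ->.
by rewrite big_ord1.
Qed.

End IG.

Section Lsum.
Variables (K : fieldType) (N : nat).
Implicit Types (f g c : {mpoly K[N]}) (P : pred 'X_{1..N}).

Definition Lsum P f : K := \sum_(u <- msupp f | P u) f@_u.

Lemma Lsum_sup P f s : uniq s -> {subset msupp f <= s} ->
  Lsum P f = \sum_(u <- s | P u) f@_u.
Proof.
move=> us sub; rewrite /Lsum [RHS](bigID (fun u => u \in msupp f)) /=.
rewrite [X in _ + X]big1 ?addr0; last first.
  by move=> u /andP[_]; rewrite -mcoeff_eq0 => /eqP.
rewrite -big_filter -[RHS]big_filter; apply: perm_big.
apply: uniq_perm; rewrite ?filter_uniq ?msupp_uniq //.
move=> u; rewrite !mem_filter; case: (boolP (u \in msupp f)) => h.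
  by rewrite (sub _ h) !andbT.
by rewrite !andbF.
Qed.

Lemma LsumD P f g : Lsum P (f + g) = Lsum P f + Lsum P g.
Proof.
pose s := undup (msupp f ++ msupp g).
have us : uniq s by rewrite undup_uniq.
rewrite (@Lsum_sup P (f + g) s) // ?(@Lsum_sup P f s) ?(@Lsum_sup P g s) //.
- by rewrite -big_split; apply: eq_bigr => u _; rewrite mcoeffD.
- by move=> u hu; rewrite mem_undup mem_cat hu orbT.
- by move=> u hu; rewrite mem_undup mem_cat hu.
move=> u; rewrite mem_undup mem_cat !mcoeff_msupp mcoeffD.
apply: contraLR; case/norP => /negbNE/eqP -> /negbNE/eqP ->.
by rewrite addr0 eqxx.
Qed.

Lemma LsumZ P a f : Lsum P (a *: f) = a * Lsum P f.
Proof.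
rewrite (@Lsum_sup P (a *: f) (msupp f)) ?msupp_uniq //; last exact: msuppZ_le.
by rewrite /Lsum mulr_sumr; apply: eq_bigr => u _; rewrite mcoeffZ.
Qed.

Lemma LsumN P f : Lsum P (- f) = - Lsum P f.
Proof. by rewrite -scaleN1r LsumZ mulN1r. Qed.

Lemma Lsum0 P : Lsum P 0 = 0.
Proof.
have := LsumD P 0 0; rewrite addr0 => h.
by apply/esym/(@addrI _ (Lsum P 0)); rewrite addr0 {1}h.
Qed.

Lemma Lsum_sum P I (r : seq I) (Q : pred I) (F : I -> {mpoly K[N]}) :
  Lsum P (\sum_(i <- r | Q i) F i) = \sum_(i <- r | Q i) Lsum P (F i).
Proof. exact: (big_morph _ (LsumD P) (Lsum0 P)). Qed.

Lemma LsumX P x : Lsum P 'X_[x] = (P x)%:R.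
Proof.
by rewrite /Lsum msuppX big_cons big_nil; case: (P x); rewrite ?mcoeffX ?eqxx ?addr0.
Qed.

Lemma Lsum_minor P c A B : (forall t, P (t + A)%MM = P (t + B)%MM) ->
  Lsum P (c * ('X_[A] - 'X_[B])) = 0.
Proof.
move=> hP; rewrite {1}(mpolyE c) mulr_suml Lsum_sum big1 // => t _.
rewrite -scalerAl LsumZ mulrBr -!mpolyXD LsumD LsumN !LsumX hP subrr mulr0 //.
Qed.

End Lsum.
Arguments Lsum {K N}.

Section Marg.
Variable n : nat.
Local Notation x := (@mxvec_index n n).

Lemma x_inj i j p b : x i j = x p b -> i = p /\ j = b.
Proof. by move/cast_ord_inj/enum_rank_inj => [-> ->]. Qed.

Lemma x_eq i j p b : (x i j == x p b) = (i == p) && (j == b).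
Proof.
by apply/eqP/andP => [/x_inj[-> ->]|[/eqP-> /eqP->]].
Qed.

Definition rowsum (m : 'X_{1..n*n}) (p : 'I_n) : nat := (\sum_(b < n) m (x p b))%N.
Definition colsum (m : 'X_{1..n*n}) (q : 'I_n) : nat := (\sum_(a < n) m (x a q))%N.
Definition mu (m : 'X_{1..n*n}) := ([ffun p => rowsum m p], [ffun q => colsum m q]).

Lemma rowsumD m1 m2 p : rowsum (m1 + m2)%MM p = (rowsum m1 p + rowsum m2 p)%N.
Proof. by rewrite /rowsum -big_split; apply: eq_bigr => b _; rewrite mnmDE. Qed.
Lemma colsumD m1 m2 p : colsum (m1 + m2)%MM p = (colsum m1 p + colsum m2 p)%N.
Proof. by rewrite /colsum -big_split; apply: eq_bigr => b _; rewrite mnmDE. Qed.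

Lemma rowsumU i j p : rowsum U_(x i j)%MM p = (i == p) :> nat.
Proof.
rewrite /rowsum (bigD1 j) //= mnm1E x_eq eqxx andbT big1 ?addn0 //.
by move=> b hb; rewrite mnm1E x_eq (eq_sym j) (negbTE hb) andbF.
Qed.

Lemma colsumU i j q : colsum U_(x i j)%MM q = (j == q) :> nat.
Proof.
rewrite /colsum (bigD1 i) //= mnm1E x_eq eqxx big1 ?addn0 //.
by move=> a ha; rewrite mnm1E x_eq (eq_sym i) (negbTE ha).
Qed.

Lemma mu_swap t (i h j k : 'I_n) :
  mu (t + (U_(x i j) + U_(x h k)))%MM = mu (t + (U_(x i k) + U_(x h j)))%MM.
Proof.
rewrite /mu; congr pair; apply/ffunP => p; rewrite !ffunE.
  by rewrite !rowsumD !rowsumU.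
by rewrite !colsumD !colsumU [((k == p) + _)%N]addnC.
Qed.

Lemma mdeg_rows m : mdeg m = (\sum_p rowsum m p)%N.
Proof.
rewrite mdegE (reindex _ (curry_mxvec_bij n n)) /= /rowsum pair_big /=.
by apply: eq_bigr => -[i j] _.
Qed.

Lemma mu_mdeg m1 m2 : mu m1 = mu m2 -> mdeg m1 = mdeg m2.
Proof.
move=> /(congr1 fst) /= /ffunP h; rewrite !mdeg_rows; apply: eq_bigr => p _.
by have := h p; rewrite !ffunE.
Qed.

End Marg.
Arguments rowsum {n}. Arguments colsum {n}. Arguments mu {n}.
Arguments x_inj {n i j p b}. Arguments mu_mdeg {n m1 m2}.

Lemma exists_lt (n : nat) (F G : 'I_n -> nat) q :
  (\sum_b F b = \sum_b G b)%N -> (G q < F q)%N -> exists b, (F b < G b)%N.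
Proof.
move=> hs hq; case: (boolP [exists b, (F b < G b)%N]) => [/existsP//|/existsPn H].
exfalso; have hle : forall b, (G b <= F b)%N by move=> b; rewrite leqNgt H.
move: hs; rewrite (bigD1 q) //= [X in _ = X](bigD1 q) //=.
move=> hs; have : (G q + \sum_(i < n | i != q) G i < F q + \sum_(i < n | i != q) F i)%N.
  apply: (@leq_ltn_trans (G q + \sum_(i < n | i != q) F i)).
    by rewrite leq_add2l; apply: leq_sum => i _; apply: hle.
  by rewrite ltn_add2r.
by rewrite hs ltnn.
Qed.

Lemma dist_lem n (i h j k : 'I_n) : (i < h)%N -> (j < k)%N ->
  ((idist i j < idist i k)%N \/ (idist i j < idist h j)%N) /\
  ((idist h k < idist i k)%N \/ (idist h k < idist h j)%N).
Proof. rewrite /idist; lia. Qed.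

Section Main.
Variables (K : fieldType) (n : nat).
Local Notation x := (@mxvec_index n n).

Lemma HgA (i h j k : 'I_n) : (i < h)%N -> (j < k)%N -> (i = j \/ h = k) ->
  Hgens (genvar K i k * genvar K h j).
Proof. by move=> *; exists i, h, j, k; split => //; left. Qed.

Lemma HgB (i h j k : 'I_n) : (i < h)%N -> (j < k)%N -> i <> j -> h <> k ->
  Hgens (genvar K i j * genvar K h k).
Proof. by move=> *; exists i, h, j, k; split => //; right. Qed.

Lemma pair_H2 (m : 'X_{1..n*n}) (a b c d : 'I_n) : a <> c ->
  (0 < m (x a b))%N -> (0 < m (x c d))%N ->
  Hgens (genvar K a b * genvar K c d) -> H2 (K := K) 'X_[m].
Proof.
move=> hac ha hc hg.
have le : (U_(x a b) + U_(x c d) <= m)%MM.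
  have hne : x a b != x c d by apply/eqP => /x_inj [/hac].
  apply/mnm_lepP => k; rewrite mnmDE !mnm1E.
  case: (eqVneq (x a b) k) => [<-|h1]; first by rewrite eq_sym (negbTE hne) addn0.
  by case: (eqVneq (x c d) k) => [<-|h2].
rewrite -(submK le) mpolyXD.
by apply: ig_single; rewrite mpolyXD.
Qed.

Variables (rk : 'I_(n * n) -> nat)
    (hdiag : forall i i' : 'I_n, (i < i')%N -> (vrank rk i i < vrank rk i' i')%N)
    (hdiag_off : forall i a b : 'I_n, a <> b -> (vrank rk i i < vrank rk a b)%N)
    (hoff : forall i j h k : 'I_n, i <> j -> h <> k ->
              (idist i j < idist h k)%N -> (vrank rk h k < vrank rk i j)%N).

Lemma core (m u : 'X_{1..n*n}) (p q : 'I_n) :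
  (forall w, (rk w < rk (x p q))%N -> u w = m w) ->
  (m (x p q) < u (x p q))%N ->
  (forall p, rowsum u p = rowsum m p) -> (forall q, colsum u q = colsum m q) ->
  ~ H2 (K := K) 'X_[m] -> False.
Proof.
move=> hw hv hr hc nH.
have [b hb] := @exists_lt n (fun b => u (x p b)) (fun b => m (x p b)) q (hr p) hv.
have [a ha] := @exists_lt n (fun a => u (x a q)) (fun a => m (x a q)) p (hc q) hv.
have hbq : b != q by apply/eqP => E; subst b; lia.
have hap : a != p by apply/eqP => E; subst a; lia.
have rb : (rk (x p q) <= rk (x p b))%N.
  by rewrite leqNgt; apply/negP => /hw E; rewrite E ltnn in hb.
have ra : (rk (x p q) <= rk (x a q))%N.
  by rewrite leqNgt; apply/negP => /hw E; rewrite E ltnn in ha.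
have mb : (0 < m (x p b))%N by lia.
have ma : (0 < m (x a q))%N by lia.
have hpa : p <> a by move=> E; rewrite E eqxx in hap.
have hap' : a <> p by move=> E; rewrite E eqxx in hap.
have hbq' : b <> q by move=> E; rewrite E eqxx in hbq.
case: (eqVneq p q) => [E|hpq].
- subst q.
  have hbp : b <> p := hbq'.
  have hpb : p <> b by move=> E; apply: hbp; rewrite E.
  case: (ltngtP a p) => [ap|pa|/val_inj E]; last by [].
  + case: (ltngtP b p) => [bp|pb|/val_inj E]; last by [].
    * by apply: nH; apply: (@pair_H2 m a p p b) => //; apply: HgA => //; right.
    * by apply: nH; apply: (@pair_H2 m a p p b) => //; apply: HgB.
  + case: (ltngtP b p) => [bp|pb|/val_inj E]; last by [].
    * by apply: nH; apply: (@pair_H2 m p b a p) => //; apply: HgB.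
    * by apply: nH; apply: (@pair_H2 m p b a p) => //; apply: HgA => //; left.
- have hpq' : p <> q by move=> E; rewrite E eqxx in hpq.
  have hbp : b <> p.
    by move=> E; subst b; have := hdiag_off p p q hpq'; rewrite /vrank; lia.
  have hpb : p <> b by move=> E; apply: hbp; rewrite E.
  have haq : a <> q.
    by move=> E; subst a; have := hdiag_off q p q hpq'; rewrite /vrank; lia.
  have db : (idist p b <= idist p q)%N.
    rewrite leqNgt; apply/negP => /(hoff p q p b hpq' hpb).
    by rewrite /vrank; lia.
  have da : (idist a q <= idist p q)%N.
    rewrite leqNgt; apply/negP => /(hoff p q a q hpq' haq).
    by rewrite /vrank; lia.
  case: (ltngtP p a) => [pa|ap|/val_inj E]; last by [].
  + case: (ltngtP b q) => [bq|qb|/val_inj E]; last by [].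
    * apply: nH; apply: (@pair_H2 m p b a q) => //.
      by apply: HgB.
    * have := dist_lem _ p a q b pa qb; lia.
  + case: (ltngtP b q) => [bq|qb|/val_inj E]; last by [].
    * have := dist_lem _ a p b q ap bq; lia.
    * apply: nH; apply: (@pair_H2 m a q p b) => //.
      by apply: HgB.
Qed.

End Main.

Section Lead.
Variables (K : fieldType) (N : nat) (rk : 'I_N -> nat).

Lemma revlex_irr m : ~ revlex_lt rk m m.
Proof. by case=> [|[_ [v [h _]]]]; [rewrite ltnn | rewrite ltnn in h]. Qed.

Lemma lead2 (a b c d : 'I_N) : (rk c <= rk d)%N -> (rk c < rk a)%N -> (rk c < rk b)%N ->
  revlex_lt rk (U_(c) + U_(d))%MM (U_(a) + U_(b))%MM.
Proof.
move=> hcd hca hcb; right; split; first by rewrite !mdegD !mdeg1.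
exists c; split.
  rewrite !mnmDE !mnm1E.
  have -> : (a == c) = false by apply/eqP => E; subst; lia.
  have -> : (b == c) = false by apply/eqP => E; subst; lia.
  by rewrite eqxx.
move=> w hw; rewrite !mnmDE !mnm1E.
have -> : (a == w) = false by apply/eqP => E; subst; lia.
have -> : (b == w) = false by apply/eqP => E; subst; lia.
have -> : (c == w) = false by apply/eqP => E; subst; lia.
have -> : (d == w) = false by apply/eqP => E; subst; lia.
by [].
Qed.

Lemma lead_minor (A B : 'X_{1..N}) : revlex_lt rk B A ->
  is_lead_mon rk ('X_[A] - 'X_[B] : {mpoly K[N]}) A.
Proof.
move=> hBA; have hne : B != A by apply/eqP => E; subst; exact: revlex_irr hBA.
split.
  by rewrite mcoeff_msupp mcoeffB !mcoeffX eqxx (negbTE hne) subr0 oner_eq0.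
move=> m'; rewrite mcoeff_msupp mcoeffB !mcoeffX => h1 h2.
rewrite (eq_sym A) (negbTE h2) sub0r oppr_eq0 in h1.
by case: (eqVneq B m') h1 => [<- //|]; rewrite eqxx.
Qed.

Lemma lead_minor2 (A B : 'X_{1..N}) : revlex_lt rk A B ->
  is_lead_mon rk ('X_[A] - 'X_[B] : {mpoly K[N]}) B.
Proof.
move=> hAB; have hne : A != B by apply/eqP => E; subst; exact: revlex_irr hAB.
split.
  by rewrite mcoeff_msupp mcoeffB !mcoeffX eqxx (negbTE hne) sub0r oppr_eq0 oner_eq0.
move=> m'; rewrite mcoeff_msupp mcoeffB !mcoeffX => h1 h2.
rewrite (eq_sym B) (negbTE h2) subr0 in h1.
by case: (eqVneq A m') h1 => [<- //|]; rewrite eqxx.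
Qed.

End Lead.

Theorem proposition4p1 (K : fieldType) (n : nat) (hn : (2 <= n)%N)
    (rk : 'I_(n * n) -> nat) (rk_inj : injective rk)
    (hdiag : forall i i' : 'I_n, (i < i')%N -> (vrank rk i i < vrank rk i' i')%N)
    (hdiag_off : forall i a b : 'I_n, a <> b -> (vrank rk i i < vrank rk a b)%N)
    (hoff : forall i j h k : 'I_n, i <> j -> h <> k ->
              (idist i j < idist h k)%N -> (vrank rk h k < vrank rk i j)%N) :
  forall p : {mpoly K[n * n]},
    initial_ideal rk (@I2 K n) p <-> @H2 K n p.
Proof.
move=> p; split.
- apply: ig_trans => g [f [m [hf hl ->]]].
  apply: NNPP => nH.
  pose P := fun u : 'X_{1..n*n} => mu u == mu m.
  have L0 : Lsum P f = 0.
    case: hf => gs [cs [hs hg ->]]; rewrite Lsum_sum big1 // => t _.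
    have := hg _ (mem_nth 0 (ltn_ord t)).
    case=> [i [h [j [k [_ _ ->]]]]].
    rewrite /genvar -!mpolyXD; apply: Lsum_minor => s.
    by rewrite /P mu_swap.
  case: (classic (exists u, [/\ u \in msupp f, u != m & mu u = mu m])).
  + case=> u [us um mueq].
    have hlt := hl.2 u us um.
    have dg := mu_mdeg mueq.
    case: hlt => [|[_ [v [hv hw]]]]; first by rewrite dg ltnn.
    move: v hv hw; case/mxvec_indexP => p0 q0 hv hw.
    apply: (@core K n rk hdiag_off hoff m u p0 q0 hw hv _ _ nH).
      move=> r; move: mueq => /(congr1 fst) /= /ffunP /(_ r).
      by rewrite !ffunE.
    move=> r; move: mueq => /(congr1 snd) /= /ffunP /(_ r).
    by rewrite !ffunE.
  + move=> H.
    have [hm _] := hl.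
    move: L0; rewrite /Lsum big_mkcond (bigD1_seq m) ?msupp_uniq //= /P eqxx.
    rewrite big1 ?addr0; last first.
      move=> u hu; case: ifP => // /eqP hmu.
      apply/eqP; rewrite mcoeff_eq0; apply/negP => us; apply: H.
      by exists u.
    by move=> /eqP; rewrite mcoeff_eq0 hm.
- apply: ig_mono => g [i [h [j [k [hih hjk hc]]]]].
  pose f := genvar K i j * genvar K h k - genvar K i k * genvar K h j.
  have If : I2 f.
    rewrite -[f]mul1r; apply: ig_single; exists i, h, j, k; split => //.
  have fE : f = 'X_[U_(mxvec_index i j) + U_(mxvec_index h k)]
              - 'X_[U_(mxvec_index i k) + U_(mxvec_index h j)].
    by rewrite /f /genvar !mpolyXD.
  have nik : forall (a b : 'I_n), (a < b)%N -> a <> b.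
    by move=> a b hab E; rewrite E ltnn in hab.
  have nik' : forall (a b : 'I_n), (a < b)%N -> b <> a.
    by move=> a b hab E; rewrite E ltnn in hab.
  case: hc => [[hc ->]|[[hij hhk] ->]].
  + exists f, (U_(mxvec_index i k) + U_(mxvec_index h j))%MM; split => //; last first.
      by rewrite /genvar mpolyXD.
    rewrite fE; apply: lead_minor2.
    case: (eqVneq i j) => [E|nij].
      subst j; apply: lead2.
      * case: (eqVneq h k) => [E|nhk].
          by subst k; have := hdiag _ _ hih; rewrite /vrank; lia.
        have := hdiag_off i h k; rewrite /vrank => H; apply: ltnW; apply: H.
        by move=> E; by rewrite E eqxx in nhk.
      * exact: (hdiag_off i i k (nik _ _ hjk)).
      * exact: (hdiag_off i h i (nik' _ _ hih)).
    have E : h = k by case: hc => // E; rewrite E eqxx in nij.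
    subst k; rewrite (addmC (U_(mxvec_index i j))%MM); apply: lead2.
    * apply: ltnW; apply: (hdiag_off h i j) => E; by rewrite E eqxx in nij.
    * exact: (hdiag_off h i h (nik _ _ hih)).
    * exact: (hdiag_off h h j (nik' _ _ hjk)).
  + exists f, (U_(mxvec_index i j) + U_(mxvec_index h k))%MM; split => //; last first.
      by rewrite /genvar mpolyXD.
    rewrite fE; apply: lead_minor.
    case: (eqVneq i k) => [E|nik2].
      subst k; apply: lead2.
      * apply: ltnW; apply: (hdiag_off i h j) => E; subst j.
        by have := ltn_trans hjk hih; rewrite ltnn.
      * exact: (hdiag_off i i j hij).
      * exact: (hdiag_off i h i hhk).
    case: (eqVneq h j) => [E|nhj].
      subst j; rewrite (addmC (U_(mxvec_index i k))%MM); apply: lead2.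
      * apply: ltnW; apply: (hdiag_off h i k) => E; by rewrite E eqxx in nik2.
      * exact: (hdiag_off h i h hij).
      * exact: (hdiag_off h h k hhk).
    have hik : i <> k by move=> E; by rewrite E eqxx in nik2.
    have hhj : h <> j by move=> E; by rewrite E eqxx in nhj.
    have d1 := hoff i j i k hij hik.
    have d2 := hoff i j h j hij hhj.
    have d3 := hoff h k i k hhk hik.
    have d4 := hoff h k h j hhk hhj.
    have dl := dist_lem _ i h j k hih hjk.
    rewrite /vrank in d1 d2 d3 d4.
    case: (leqP (rk (mxvec_index i k)) (rk (mxvec_index h j))) => hle.
      apply: lead2 => //; lia.
    rewrite (addmC (U_(mxvec_index i k))%MM); apply: lead2; lia.
Qed.
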